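(* Let $\Gamma$ be a skew-symmetric graph with three vertices $\{1,2,3\}$ and adjacency entries $a_{1,2}=1$, $a_{1,3}=\alpha$, $a_{2,3}=\beta$ ($\alpha,\beta\in\mathbb F$). Then $\Gamma$ has the Kahan-Poisson property if and only if $(\alpha,\beta)\in\{(0,0),(0,-1),(1,0),(1,-1),(1,1),(-1,-1)\}$.
   Context: $\mathbb F\in\{\mathbb R,\mathbb C\}$. A skew-symmetric graph $\Gamma=(S,A)$ has $A=(a_{i,j})$ skew-symmetric over $\mathbb F$. Its Poisson bracket on $\mathbb F(x_1,x_2,x_3)$ is $\{x_i,x_j\}=a_{i,j}x_ix_j$; its Kahan morphism is $K(x_i)=\tilde x_i$, where $\tilde x_i$ is the unique solution of the linear system $\tilde x_i-x_i=\tilde x_i\sum_ja_{i,j}x_j+x_i\sum_ja_{i,j}\tilde x_j$; $\Gamma$ has the Kahan-Poisson property if $\{\tilde x_i,\tilde x_j\}=a_{i,j}\tilde x_i\tilde x_j$ for all $i,j$. *)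

(* Defs.v *)
From HB Require Import structures.
From mathcomp Require Import all_boot all_order all_algebra.
From mathcomp Require Import fraction.
From mathcomp Require Import mpoly.
From mathcomp Require Import reals.
From mathcomp.real_closed Require Import complex.

Set Implicit Arguments.
Unset Strict Implicit.
Unset Printing Implicit Defensive.

Import GRing.Theory Num.Theory.
Local Open Scope ring_scope.

Section Kahan.
Variable F : fieldType.

(* The field of rational functions F(x_1, x_2, x_3); variables indexed by 'I_3
   (index 0,1,2 stand for the vertices 1,2,3). *)
Definition ratfun := {fraction {mpoly F[3]}}.
Local Notation "x %:F" := (@FracField.tofrac {mpoly F[3]} x).

Definition xvar (i : 'I_3) : ratfun := ('X_i)%:F.

Definition cst (c : F) : ratfun := (c%:MP)%:F.

(* formal partial derivative d/dx_i on F(x_1,x_2,x_3), computed by the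
   quotient rule on a representative numerator/denominator pair
   (the result does not depend on the representative). *)
Definition pderiv (i : 'I_3) (f : ratfun) : ratfun :=
  let r := repr f in
  let n := \n_r in let d := \d_r in
  ((mderiv i n)%:F * d%:F - n%:F * (mderiv i d)%:F) / (d%:F ^+ 2).

Definition skew_symmetric (A : 'M[F]_3) : Prop := A^T = - A.

Definition pbracket (A : 'M[F]_3) (f g : ratfun) : ratfun :=
  \sum_(i < 3) \sum_(j < 3)
    cst (A i j) * xvar i * xvar j * pderiv i f * pderiv j g.

Definition kahan_system (A : 'M[F]_3) (xt : 'I_3 -> ratfun) : Prop :=
  forall i : 'I_3,
    xt i - xvar i = xt i * (\sum_(j < 3) cst (A i j) * xvar j)
                    + xvar i * (\sum_(j < 3) cst (A i j) * xt j).

(* Kahan-Poisson property: the (unique) solution xt = K(x) of the Kahan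
   system satisfies {xt_i, xt_j} = a_ij xt_i xt_j for all i, j. *)
Definition kahan_poisson (A : 'M[F]_3) : Prop :=
  forall xt : 'I_3 -> ratfun, kahan_system A xt ->
    forall i j : 'I_3, pbracket A (xt i) (xt j) = cst (A i j) * xt i * xt j.

Definition adj3 (alpha beta : F) : 'M[F]_3 :=
  \matrix_(i < 3, j < 3)
    match nat_of_ord i, nat_of_ord j with
    | 0, 1 => 1 | 1, 0 => -1
    | 0, 2 => alpha | 2, 0 => - alpha
    | 1, 2 => beta | 2, 1 => - beta
    | _, _ => 0
    end.

Definition good_pair (alpha beta : F) : Prop :=
  (alpha = 0 /\ beta = 0) \/ (alpha = 0 /\ beta = -1) \/
  (alpha = 1 /\ beta = 0) \/ (alpha = 1 /\ beta = -1) \/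
  (alpha = 1 /\ beta = 1) \/ (alpha = -1 /\ beta = -1).

Lemma adj3_skew (alpha beta : F) : skew_symmetric (adj3 alpha beta).
Proof.
apply/matrixP => i j; rewrite !mxE.
by case: i => [[|[|[|?]]] ?]; case: j => [[|[|[|?]]] ?] //=; rewrite ?opprK ?oppr0.
Qed.

End Kahan.

(* Main.v *)
Require Import Defs.
From HB Require Import structures.
From mathcomp Require Import all_boot all_order all_algebra.
From mathcomp Require Import reals.
From mathcomp.real_closed Require Import complex.
From mathcomp Require Import fraction mpoly generic_quotient.
From mathcomp Require Import ring.
Set Implicit Arguments.
Unset Strict Implicit.
Unset Printing Implicit Defensive.
Import GRing.Theory Num.Theory.
Local Open Scope ring_scope.
Local Notation "x %:F" := (@FracField.tofrac _ x).

Definition Dg {R : comPzRingType} (a b x y z : R) : R := (1 - b*z - a*z + a*b*z*z - y + b*y + b*y*z - a*b*y*z - b*y*y + x + a*x - a*x*z - a*b*x*z + b*x*y - a*x*y + a*x*x).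
Definition Ng {R : comPzRingType} (k : nat) (a b x y z : R) : R := match k with 0 => (x - b*x*z + a*x*z - a*b*x*z*z + x*y + b*x*y + b*x*y*z - a*b*x*y*z + b*x*y*y + x*x + a*x*x + a*x*x*z - a*b*x*x*z + b*x*x*y + a*x*x*y + a*x*x*x) | 1 => (y + b*y*z - a*y*z - a*b*y*z*z - y*y + b*y*y - b*y*y*z - a*b*y*y*z - b*y*y*y - x*y + a*x*y - a*x*y*z - a*b*x*y*z - b*x*y*y - a*x*y*y - a*x*x*y) | _ => (z - b*z*z - a*z*z + a*b*z*z*z - y*z - b*y*z + b*y*z*z + a*b*y*z*z + b*y*y*z + x*z - a*x*z - a*x*z*z + a*b*x*z*z + b*x*y*z - a*x*y*z - a*x*x*z) end.
Definition dDg {R : comPzRingType} (p : nat) (a b x y z : R) : R := match p with 0 => (1 + a - a*z - a*b*z + b*y - a*y + 2*a*x) | 1 => (- 1 + b + b*z - a*b*z - 2*b*y + b*x - a*x) | _ => (- b - a + 2*a*b*z + b*y - a*b*y - a*x - a*b*x) end.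
Definition dNg {R : comPzRingType} (k p : nat) (a b x y z : R) : R := match k with 0 => match p with 0 => (1 - b*z + a*z - a*b*z*z + y + b*y + b*y*z - a*b*y*z + b*y*y + 2*x + 2*a*x + 2*a*x*z - 2*a*b*x*z + 2*b*x*y + 2*a*x*y + 3*a*x*x) | 1 => (x + b*x + b*x*z - a*b*x*z + 2*b*x*y + b*x*x + a*x*x) | _ => (- b*x + a*x - 2*a*b*x*z + b*x*y - a*b*x*y + a*x*x - a*b*x*x) end | 1 => match p with 0 => (- y + a*y - a*y*z - a*b*y*z - b*y*y - a*y*y - 2*a*x*y) | 1 => (1 + b*z - a*z - a*b*z*z - 2*y + 2*b*y - 2*b*y*z - 2*a*b*y*z - 3*b*y*y - x + a*x - a*x*z - a*b*x*z - 2*b*x*y - 2*a*x*y - a*x*x) | _ => (b*y - a*y - 2*a*b*y*z - b*y*y - a*b*y*y - a*x*y - a*b*x*y) end | _ => match p with 0 => (z - a*z - a*z*z + a*b*z*z + b*y*z - a*y*z - 2*a*x*z) | 1 => (- z - b*z + b*z*z + a*b*z*z + 2*b*y*z + b*x*z - a*x*z) | _ => (1 - 2*b*z - 2*a*z + 3*a*b*z*z - y - b*y + 2*b*y*z + 2*a*b*y*z + b*y*y + x - a*x - 2*a*x*z + 2*a*b*x*z + b*x*y - a*x*y - a*x*x) end end.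
Definition Adj {R : comPzRingType} (k i : nat) (a b x y z : R) : R := match k with 0 => match i with 0 => (1 - b*z + b*y + x + a*x - a*b*x*z + b*x*y + a*x*x) | 1 => (x - a*b*x*z + b*x*y + a*x*x) | _ => (a*x - a*b*x*z + b*x*y + a*x*x) end | 1 => match i with 0 => (- y - a*b*y*z - b*y*y - a*x*y) | 1 => (1 - a*z - y + b*y - a*b*y*z - b*y*y + a*x - a*x*y) | _ => (b*y - a*b*y*z - b*y*y - a*x*y) end | _ => match i with 0 => (- a*z + a*b*z*z + b*y*z - a*x*z) | 1 => (- b*z + a*b*z*z + b*y*z - a*x*z) | _ => (1 - b*z - a*z + a*b*z*z - y + b*y*z + x - a*x*z) end end.
Definition cc0 {R : comPzRingType} (a b : R) : R := (- 2*a + 2*a*a*a).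
Definition GG0 {R : comPzRingType} (a b x : R) : R := (- 8*a - 4*a^+2 + 8*a^+3 + 4*a^+4 - 2*b*x - 2*b^+2*x - 6*a*x + 4*a*b*x - 16*a^+2*x - 2*a^+2*b*x + 2*a^+2*b^+2*x + 8*a^+3*x + 12*a^+4*x + 2*a^+5*x - 4*b*x^+2 - 4*b^+2*x^+2 + 8*a*x^+2 - 8*a*b*x^+2 - 12*a*b^+2*x^+2 + 20*a^+2*b*x^+2 + 12*a^+2*b^+2*x^+2 - 12*a^+3*x^+2 + 4*a^+3*b^+2*x^+2 - 8*a^+4*b*x^+2 + 4*a^+5*x^+2 + 2*b*x^+3 + 4*b^+2*x^+3 + 2*b^+3*x^+3 + 6*a*x^+3 - 36*a*b*x^+3 - 2*a*b^+2*x^+3 + 12*a*b^+3*x^+3 + 40*a^+2*x^+3 + 12*a^+2*b*x^+3 - 10*a^+2*b^+2*x^+3 + 2*a^+2*b^+3*x^+3 + 2*a^+3*x^+3 + 36*a^+3*b*x^+3 + 6*a^+3*b^+2*x^+3 - 40*a^+4*x^+3 - 22*a^+4*b*x^+3 + 2*a^+4*b^+2*x^+3 - 8*a^+5*x^+3 - 8*a^+5*b*x^+3 + 4*b*x^+4 - 4*b^+3*x^+4 - 4*a*x^+4 + 4*a*b*x^+4 + 60*a*b^+2*x^+4 + 20*a*b^+3*x^+4 + 12*a^+2*x^+4 - 56*a^+2*b*x^+4 - 8*a^+2*b^+2*x^+4 + 20*a^+2*b^+3*x^+4 + 44*a^+3*x^+4 + 20*a^+3*b*x^+4 - 52*a^+3*b^+2*x^+4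 - 4*a^+3*b^+3*x^+4 - 28*a^+4*x^+4 + 12*a^+4*b*x^+4 - 24*a^+5*x^+4 - 16*a^+5*b*x^+4 - 2*b*x^+5 - 12*b^+2*x^+5 - 6*b^+3*x^+5 + 4*b^+4*x^+5 + 36*a*b*x^+5 - 8*a*b^+2*x^+5 - 40*a*b^+3*x^+5 - 20*a^+2*x^+5 + 42*a^+2*b*x^+5 + 86*a^+2*b^+2*x^+5 - 4*a^+2*b^+3*x^+5 - 4*a^+2*b^+4*x^+5 - 4*a^+3*x^+5 - 64*a^+3*b*x^+5 - 52*a^+3*b^+2*x^+5 - 8*a^+3*b^+3*x^+5 + 24*a^+4*x^+5 + 28*a^+4*b*x^+5 - 26*a^+4*b^+2*x^+5 - 6*a^+4*b^+3*x^+5 + 24*a^+5*b*x^+5 + 12*a^+5*b^+2*x^+5 + 4*b^+2*x^+6 + 8*b^+3*x^+6 + 4*b^+4*x^+6 - 8*a*b*x^+6 - 84*a*b^+2*x^+6 - 24*a*b^+3*x^+6 + 12*a*b^+4*x^+6 + 88*a^+2*b*x^+6 - 48*a^+2*b^+2*x^+6 - 116*a^+2*b^+3*x^+6 - 12*a^+2*b^+4*x^+6 - 32*a^+3*x^+6 + 48*a^+3*b*x^+6 + 92*a^+3*b^+2*x^+6 - 32*a^+3*b^+3*x^+6 - 4*a^+3*b^+4*x^+6 - 24*a^+4*b*x^+6 + 12*a^+4*b^+2*x^+6 + 4*a^+4*b^+3*x^+6 + 32*a^+5*x^+6 + 56*a^+5*b*x^+6 + 24*a^+5*b^+2*x^+6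 + 2*b^+2*x^+7 - 12*b^+3*x^+7 - 14*b^+4*x^+7 - 4*a*b*x^+7 + 22*a*b^+2*x^+7 + 52*a*b^+3*x^+7 - 32*a^+2*b*x^+7 - 102*a^+2*b^+2*x^+7 - 14*a^+2*b^+3*x^+7 + 8*a^+2*b^+4*x^+7 + 44*a^+3*b*x^+7 - 18*a^+3*b^+2*x^+7 - 72*a^+3*b^+3*x^+7 - 16*a^+4*x^+7 + 8*a^+4*b*x^+7 + 104*a^+4*b^+2*x^+7 + 38*a^+4*b^+3*x^+7 + 6*a^+4*b^+4*x^+7 + 16*a^+5*x^+7 - 8*a^+5*b^+2*x^+7 - 8*a^+5*b^+3*x^+7 - 4*b^+3*x^+8 + 4*b^+5*x^+8 + 20*a*b^+2*x^+8 - 20*a*b^+3*x^+8 - 36*a*b^+4*x^+8 - 4*a*b^+5*x^+8 - 16*a^+2*b*x^+8 + 76*a^+2*b^+2*x^+8 + 88*a^+2*b^+3*x^+8 - 12*a^+2*b^+4*x^+8 - 4*a^+2*b^+5*x^+8 - 64*a^+3*b*x^+8 - 44*a^+3*b^+2*x^+8 + 76*a^+3*b^+3*x^+8 + 44*a^+3*b^+4*x^+8 + 4*a^+3*b^+5*x^+8 - 16*a^+4*b*x^+8 - 12*a^+4*b^+2*x^+8 + 4*a^+4*b^+3*x^+8 + 4*a^+4*b^+4*x^+8 - 32*a^+5*b*x^+8 - 40*a^+5*b^+2*x^+8 - 16*a^+5*b^+3*x^+8 + 4*b^+3*x^+9 + 2*b^+4*x^+9 - 2*b^+5*x^+9 -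 8*a*b^+3*x^+9 + 6*a*b^+4*x^+9 + 32*a^+2*b^+2*x^+9 - 8*a^+2*b^+3*x^+9 - 16*a^+2*b^+4*x^+9 + 4*a^+2*b^+5*x^+9 - 16*a^+3*b*x^+9 + 48*a^+3*b^+2*x^+9 + 80*a^+3*b^+3*x^+9 + 8*a^+3*b^+4*x^+9 - 32*a^+4*b*x^+9 - 48*a^+4*b^+2*x^+9 + 4*a^+4*b^+3*x^+9 - 2*a^+4*b^+4*x^+9 - 2*a^+4*b^+5*x^+9 - 16*a^+5*b*x^+9 - 32*a^+5*b^+2*x^+9 - 8*a^+5*b^+3*x^+9 + 2*a^+5*b^+4*x^+9 - 4*b^+4*x^+10 - 4*b^+5*x^+10 + 8*a*b^+3*x^+10 + 12*a*b^+4*x^+10 + 16*a^+2*b^+4*x^+10 + 8*a^+2*b^+5*x^+10 - 16*a^+3*b^+3*x^+10 - 16*a^+3*b^+4*x^+10 - 12*a^+4*b^+4*x^+10 - 4*a^+4*b^+5*x^+10 + 8*a^+5*b^+3*x^+10 + 4*a^+5*b^+4*x^+10).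
Definition cc1 {R : comPzRingType} (a b : R) : R := (2*a + 2*a*b - 2*a*a - 2*a*a*b).
Definition GG1 {R : comPzRingType} (a b x : R) : R := (4*b + 4*b^+2 + 4*a + 2*a*b - 4*a*b^+2 - 2*a^+2 - 2*a^+2*b - 2*a^+3 - 4*a^+3*b + 10*b*x + 4*b^+2*x - 6*b^+3*x - 2*a*x + 8*a*b*x - 2*a*b^+2*x - 2*a*b^+3*x + 2*a^+2*x + 4*a^+2*b*x - 2*a^+2*b^+2*x - 2*a^+3*x - 12*a^+3*b*x + 2*a^+4*x - 2*a^+4*b*x - 10*b^+2*x^+2 - 10*b^+3*x^+2 - 4*a*x^+2 + 32*a*b*x^+2 + 6*a*b^+2*x^+2 - 10*a*b^+3*x^+2 - 10*a^+2*x^+2 + 2*a^+2*b*x^+2 - 8*a^+2*b^+2*x^+2 - 4*a^+2*b^+3*x^+2 + 6*a^+3*x^+2 + 12*a^+3*b^+2*x^+2 + 6*a^+4*x^+2 - 10*a^+4*b*x^+2 + 2*a^+5*x^+2 - 10*b*x^+3 + 10*b^+2*x^+3 + 20*b^+3*x^+3 + 2*a*x^+3 - 8*a*b*x^+3 - 36*a*b^+2*x^+3 - 10*a*b^+3*x^+3 - 10*a^+2*x^+3 + 6*a^+2*b*x^+3 + 8*a^+2*b^+3*x^+3 - 4*a^+3*x^+3 + 4*a^+3*b*x^+3 + 16*a^+3*b^+2*x^+3 - 2*a^+3*b^+3*x^+3 + 8*a^+4*x^+3 - 6*a^+4*b*x^+3 + 10*a^+4*b^+2*x^+3 + 4*a^+5*x^+3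 - 2*a^+5*b*x^+3 + 30*b^+2*x^+4 + 18*b^+3*x^+4 - 12*b^+4*x^+4 - 56*a*b*x^+4 - 2*a*b^+2*x^+4 + 50*a*b^+3*x^+4 + 8*a*b^+4*x^+4 + 10*a^+2*x^+4 - 54*a^+2*b*x^+4 - 34*a^+2*b^+2*x^+4 + 42*a^+2*b^+3*x^+4 + 4*a^+2*b^+4*x^+4 - 6*a^+3*x^+4 - 4*a^+3*b*x^+4 - 14*a^+3*b^+2*x^+4 + 2*a^+3*b^+3*x^+4 - 4*a^+4*x^+4 + 8*a^+4*b*x^+4 + 20*a^+4*b^+2*x^+4 - 6*a^+5*b*x^+4 + 2*b*x^+5 - 10*b^+2*x^+5 - 24*b^+3*x^+5 - 12*b^+4*x^+5 + 6*a*b*x^+5 + 78*a*b^+2*x^+5 + 32*a*b^+3*x^+5 + 4*a*b^+4*x^+5 - 94*a^+2*b*x^+5 - 4*a^+2*b^+2*x^+5 + 62*a^+2*b^+3*x^+5 + 4*a^+2*b^+4*x^+5 + 16*a^+3*x^+5 - 18*a^+3*b*x^+5 - 50*a^+3*b^+2*x^+5 + 30*a^+3*b^+3*x^+5 + 4*a^+3*b^+4*x^+5 - 8*a^+4*x^+5 + 20*a^+4*b*x^+5 - 16*a^+4*b^+2*x^+5 - 12*a^+4*b^+3*x^+5 - 8*a^+5*x^+5 - 4*a^+5*b*x^+5 + 2*a^+5*b^+2*x^+5 - 10*b^+2*x^+6 + 14*b^+3*x^+6 + 24*b^+4*x^+6 + 14*a*b*x^+6 - 38*a*b^+2*x^+6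 - 96*a*b^+3*x^+6 - 4*a*b^+4*x^+6 + 44*a^+2*b*x^+6 + 110*a^+2*b^+2*x^+6 + 2*a^+2*b^+3*x^+6 - 8*a^+2*b^+4*x^+6 - 26*a^+3*b*x^+6 - 2*a^+3*b^+2*x^+6 + 38*a^+3*b^+3*x^+6 - 12*a^+3*b^+4*x^+6 + 8*a^+4*x^+6 + 16*a^+4*b*x^+6 - 62*a^+4*b^+2*x^+6 - 14*a^+4*b^+3*x^+6 - 8*a^+5*x^+6 + 8*a^+5*b*x^+6 + 2*a^+5*b^+2*x^+6 + 2*b^+2*x^+7 + 20*b^+3*x^+7 + 12*b^+4*x^+7 - 6*b^+5*x^+7 - 30*a*b^+2*x^+7 + 10*a*b^+3*x^+7 + 50*a*b^+4*x^+7 + 10*a*b^+5*x^+7 + 32*a^+2*b*x^+7 - 58*a^+2*b^+2*x^+7 - 126*a^+2*b^+3*x^+7 - 14*a^+2*b^+4*x^+7 - 2*a^+2*b^+5*x^+7 + 72*a^+3*b*x^+7 + 106*a^+3*b^+2*x^+7 - 28*a^+3*b^+3*x^+7 - 50*a^+3*b^+4*x^+7 - 2*a^+3*b^+5*x^+7 - 16*a^+4*b*x^+7 - 16*a^+4*b^+2*x^+7 + 26*a^+4*b^+3*x^+7 + 2*a^+4*b^+4*x^+7 + 8*a^+5*b*x^+7 - 4*a^+5*b^+2*x^+7 + 2*a^+5*b^+3*x^+7 - 4*b^+3*x^+8 - 6*b^+4*x^+8 - 2*b^+5*x^+8 + 4*a*b^+2*x^+8 + 26*a*b^+3*x^+8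 + 2*a*b^+4*x^+8 + 6*a*b^+5*x^+8 - 36*a^+2*b^+2*x^+8 + 32*a^+2*b^+3*x^+8 + 38*a^+2*b^+4*x^+8 - 6*a^+2*b^+5*x^+8 + 24*a^+3*b*x^+8 - 44*a^+3*b^+2*x^+8 - 128*a^+3*b^+3*x^+8 - 34*a^+3*b^+4*x^+8 + 2*a^+3*b^+5*x^+8 + 16*a^+4*b*x^+8 + 76*a^+4*b^+2*x^+8 + 36*a^+4*b^+3*x^+8 - 8*a^+5*b*x^+8 + 6*a^+5*b^+3*x^+8 - 4*b^+3*x^+9 + 2*b^+4*x^+9 + 6*b^+5*x^+9 - 12*a*b^+3*x^+9 - 26*a*b^+4*x^+9 + 4*a*b^+5*x^+9 + 24*a^+2*b^+3*x^+9 - 28*a^+2*b^+4*x^+9 - 24*a^+2*b^+5*x^+9 - 16*a^+3*b^+2*x^+9 + 24*a^+3*b^+3*x^+9 + 60*a^+3*b^+4*x^+9 + 12*a^+3*b^+5*x^+9 - 36*a^+4*b^+3*x^+9 - 6*a^+4*b^+4*x^+9 + 2*a^+4*b^+5*x^+9 + 16*a^+5*b^+2*x^+9 + 4*a^+5*b^+3*x^+9 - 2*a^+5*b^+4*x^+9 + 4*b^+4*x^+10 + 4*b^+5*x^+10 - 8*a*b^+3*x^+10 - 12*a*b^+4*x^+10 - 16*a^+2*b^+4*x^+10 - 8*a^+2*b^+5*x^+10 + 16*a^+3*b^+3*x^+10 + 16*a^+3*b^+4*x^+10 + 12*a^+4*b^+4*x^+10 + 4*a^+4*b^+5*x^+10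 - 8*a^+5*b^+3*x^+10 - 4*a^+5*b^+4*x^+10).
Definition cc2 {R : comPzRingType} (a b : R) : R := (2*b - 2*b*b*b).
Definition GG2 {R : comPzRingType} (a b x : R) : R := (4*b^+2 - 4*b^+4 - 2*b*x + 8*b^+3*x + 4*b^+4*x - 2*b^+5*x + 2*a*x - 6*a*b^+2*x - 4*a*b^+3*x - 2*a^+2*x + 2*a^+2*b^+2*x + 8*b*x^+2 - 8*b^+2*x^+2 - 12*b^+3*x^+2 + 8*b^+4*x^+2 + 4*b^+5*x^+2 - 4*a*x^+2 + 12*a*b^+2*x^+2 + 8*a*b^+3*x^+2 + 4*a^+2*x^+2 - 12*a^+2*b*x^+2 - 12*a^+2*b^+2*x^+2 + 4*a^+2*b^+3*x^+2 - 6*b*x^+3 + 32*b^+2*x^+3 + 6*b^+3*x^+3 - 32*b^+4*x^+3 + 6*a*x^+3 - 16*a*b*x^+3 - 44*a*b^+2*x^+3 + 20*a*b^+3*x^+3 + 30*a*b^+4*x^+3 + 4*a*b^+5*x^+3 - 8*a^+2*x^+3 + 22*a^+2*b*x^+3 + 10*a^+2*b^+2*x^+3 - 18*a^+2*b^+3*x^+3 + 2*a^+2*b^+4*x^+3 + 2*a^+3*x^+3 - 12*a^+3*b*x^+3 + 2*a^+3*b^+2*x^+3 + 4*b*x^+4 - 28*b^+2*x^+4 + 28*b^+3*x^+4 + 44*b^+4*x^+4 - 16*b^+5*x^+4 - 4*a*x^+4 + 28*a*b*x^+4 + 32*a*b^+2*x^+4 - 76*a*b^+3*x^+4 - 36*a*b^+4*x^+4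 + 8*a*b^+5*x^+4 - 60*a^+2*b*x^+4 + 8*a^+2*b^+2*x^+4 + 68*a^+2*b^+3*x^+4 + 4*a^+3*x^+4 + 20*a^+3*b*x^+4 - 20*a^+3*b^+2*x^+4 - 4*a^+3*b^+3*x^+4 + 20*b^+2*x^+5 - 36*b^+3*x^+5 - 24*b^+4*x^+5 + 32*b^+5*x^+5 + 2*a*x^+5 - 24*a*b*x^+5 - 10*a*b^+2*x^+5 + 124*a*b^+3*x^+5 + 12*a*b^+4*x^+5 - 32*a*b^+5*x^+5 + 44*a^+2*b*x^+5 - 58*a^+2*b^+2*x^+5 - 92*a^+2*b^+3*x^+5 + 10*a^+2*b^+4*x^+5 - 6*a^+3*x^+5 - 24*a^+3*b*x^+5 + 60*a^+3*b^+2*x^+5 + 8*a^+3*b^+3*x^+5 - 6*a^+3*b^+4*x^+5 + 4*a^+4*x^+5 - 4*a^+4*b^+2*x^+5 + 32*b^+3*x^+6 - 32*b^+5*x^+6 + 8*a*b*x^+6 - 24*a*b^+2*x^+6 - 128*a*b^+3*x^+6 + 56*a*b^+4*x^+6 + 56*a*b^+5*x^+6 - 4*a^+2*x^+6 - 36*a^+2*b*x^+6 + 120*a^+2*b^+2*x^+6 + 92*a^+2*b^+3*x^+6 - 84*a^+2*b^+4*x^+6 - 24*a^+2*b^+5*x^+6 + 8*a^+3*x^+6 + 16*a^+3*b*x^+6 - 92*a^+3*b^+2*x^+6 + 8*a^+3*b^+3*x^+6 + 12*a^+3*b^+4*x^+6 - 4*a^+4*x^+6 + 12*a^+4*b*x^+6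 + 12*a^+4*b^+2*x^+6 - 4*a^+4*b^+3*x^+6 + 16*b^+4*x^+7 + 16*b^+5*x^+7 + 4*a*b*x^+7 + 52*a*b^+3*x^+7 - 88*a*b^+4*x^+7 - 32*a*b^+5*x^+7 - 2*a^+2*x^+7 - 2*a^+2*b*x^+7 - 106*a^+2*b^+2*x^+7 - 18*a^+2*b^+3*x^+7 + 104*a^+2*b^+4*x^+7 + 16*a^+2*b^+5*x^+7 + 24*a^+3*b*x^+7 + 114*a^+3*b^+2*x^+7 - 56*a^+3*b^+3*x^+7 - 38*a^+3*b^+4*x^+7 - 4*a^+3*b^+5*x^+7 + 2*a^+4*x^+7 - 16*a^+4*b*x^+7 - 8*a^+4*b^+2*x^+7 + 16*a^+4*b^+3*x^+7 + 6*a^+4*b^+4*x^+7 + 16*a*b^+2*x^+8 - 32*a*b^+3*x^+8 + 80*a*b^+4*x^+8 - 20*a^+2*b*x^+8 + 36*a^+2*b^+2*x^+8 - 44*a^+2*b^+3*x^+8 - 100*a^+2*b^+4*x^+8 + 4*a^+3*x^+8 + 4*a^+3*b*x^+8 - 64*a^+3*b^+2*x^+8 + 76*a^+3*b^+3*x^+8 + 20*a^+3*b^+4*x^+8 + 8*a^+3*b^+5*x^+8 + 28*a^+4*b*x^+8 + 12*a^+4*b^+2*x^+8 - 20*a^+4*b^+3*x^+8 - 4*a^+4*b^+4*x^+8 - 4*a^+5*x^+8 - 4*a^+5*b*x^+8 + 4*a^+5*b^+2*x^+8 + 4*a^+5*b^+3*x^+8 + 16*a*b^+3*x^+9 - 32*a*b^+4*x^+9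 + 16*a*b^+5*x^+9 - 32*a^+2*b^+2*x^+9 + 48*a^+2*b^+3*x^+9 + 48*a^+2*b^+4*x^+9 - 32*a^+2*b^+5*x^+9 - 4*a^+3*x^+9 + 16*a^+3*b*x^+9 + 8*a^+3*b^+2*x^+9 - 96*a^+3*b^+3*x^+9 - 4*a^+3*b^+4*x^+9 + 16*a^+3*b^+5*x^+9 + 6*a^+4*x^+9 - 10*a^+4*b*x^+9 + 16*a^+4*b^+2*x^+9 + 24*a^+4*b^+3*x^+9 - 6*a^+4*b^+4*x^+9 + 2*a^+4*b^+5*x^+9 - 2*a^+5*x^+9 + 4*a^+5*b^+2*x^+9 - 2*a^+5*b^+4*x^+9 - 8*a^+3*b*x^+10 + 16*a^+3*b^+3*x^+10 - 8*a^+3*b^+5*x^+10 + 4*a^+4*x^+10 + 12*a^+4*b*x^+10 - 16*a^+4*b^+2*x^+10 - 16*a^+4*b^+3*x^+10 + 12*a^+4*b^+4*x^+10 + 4*a^+4*b^+5*x^+10 - 4*a^+5*x^+10 + 8*a^+5*b^+2*x^+10 - 4*a^+5*b^+4*x^+10).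
Definition cc3 {R : comPzRingType} (a b : R) : R := (2*b*b + 2*b*b*b - 2*a*b - 2*a*b*b).
Definition GG3 {R : comPzRingType} (a b x : R) : R := (- 2*b^+2 + 2*b^+3 + 4*b^+4 + 4*a*b + 2*a*b^+2 - 2*a*b^+3 - 4*a^+2*b - 4*a^+2*b^+2 + 2*b^+2*x - 6*b^+3*x - 6*b^+4*x + 2*b^+5*x + 2*a*b*x + 2*a*b^+2*x + 10*a*b^+3*x + 2*a*b^+4*x - 2*a^+2*x + 6*a^+2*b*x - 8*a^+2*b^+3*x + 2*a^+3*x - 6*a^+3*b*x - 2*b^+2*x^+2 + 10*b^+3*x^+2 + 6*b^+4*x^+2 - 6*b^+5*x^+2 - 2*a*b*x^+2 + 2*a*b^+2*x^+2 - 32*a*b^+3*x^+2 - 10*a*b^+4*x^+2 + 2*a*b^+5*x^+2 + 4*a^+2*x^+2 - 4*a^+2*b*x^+2 + 18*a^+2*b^+2*x^+2 + 22*a^+2*b^+3*x^+2 - 4*a^+2*b^+4*x^+2 - 4*a^+3*x^+2 + 10*a^+3*b*x^+2 - 10*a^+3*b^+2*x^+2 + 2*b^+2*x^+3 - 10*b^+3*x^+3 + 12*b^+5*x^+3 + 6*a*b*x^+3 - 14*a*b^+2*x^+3 + 32*a*b^+3*x^+3 - 12*a*b^+4*x^+3 - 16*a*b^+5*x^+3 - 4*a^+2*x^+3 + 16*a^+2*b*x^+3 - 28*a^+2*b^+2*x^+3 - 36*a^+2*b^+3*x^+3 + 12*a^+2*b^+4*x^+3 + 4*a^+3*x^+3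 - 10*a^+3*b*x^+3 + 40*a^+3*b^+2*x^+3 + 6*a^+3*b^+3*x^+3 - 2*b^+2*x^+4 + 10*b^+3*x^+4 - 4*b^+4*x^+4 - 16*b^+5*x^+4 + 2*a*b*x^+4 + 18*a*b^+2*x^+4 - 62*a*b^+3*x^+4 + 32*a*b^+4*x^+4 + 30*a*b^+5*x^+4 + 4*a^+2*x^+4 - 24*a^+2*b*x^+4 + 26*a^+2*b^+2*x^+4 + 14*a^+2*b^+3*x^+4 - 46*a^+2*b^+4*x^+4 - 6*a^+2*b^+5*x^+4 + 22*a^+3*b*x^+4 - 46*a^+3*b^+2*x^+4 + 22*a^+3*b^+3*x^+4 + 10*a^+3*b^+4*x^+4 - 4*a^+4*x^+4 + 8*a^+4*b*x^+4 + 12*a^+4*b^+2*x^+4 - 8*b^+3*x^+5 + 8*b^+4*x^+5 + 16*b^+5*x^+5 + 4*a*b^+2*x^+5 + 60*a*b^+3*x^+5 - 84*a*b^+4*x^+5 - 36*a*b^+5*x^+5 + 16*a^+2*b*x^+5 - 70*a^+2*b^+2*x^+5 - 6*a^+2*b^+3*x^+5 + 100*a^+2*b^+4*x^+5 + 20*a^+2*b^+5*x^+5 - 12*a^+3*b*x^+5 + 50*a^+3*b^+2*x^+5 - 58*a^+3*b^+3*x^+5 - 16*a^+3*b^+4*x^+5 + 8*a^+4*b^+2*x^+5 + 8*a^+4*b^+3*x^+5 - 8*b^+4*x^+6 - 8*b^+5*x^+6 + 2*a*b*x^+6 - 4*a*b^+2*x^+6 - 38*a*b^+3*x^+6 + 96*a*b^+4*x^+6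 + 8*a*b^+5*x^+6 + 4*a^+2*b*x^+6 + 64*a^+2*b^+2*x^+6 - 36*a^+2*b^+3*x^+6 - 102*a^+2*b^+4*x^+6 - 6*a^+2*b^+5*x^+6 - 18*a^+3*b*x^+6 - 68*a^+3*b^+2*x^+6 + 102*a^+3*b^+3*x^+6 + 38*a^+3*b^+4*x^+6 + 6*a^+3*b^+5*x^+6 + 12*a^+4*b*x^+6 - 8*a^+4*b^+2*x^+6 - 28*a^+4*b^+3*x^+6 - 8*a^+4*b^+4*x^+6 + 8*a*b^+2*x^+7 - 88*a*b^+4*x^+7 + 16*a*b^+5*x^+7 + 2*a^+2*x^+7 - 10*a^+2*b*x^+7 - 26*a^+2*b^+2*x^+7 + 94*a^+2*b^+3*x^+7 + 96*a^+2*b^+4*x^+7 - 12*a^+2*b^+5*x^+7 + 2*a^+3*x^+7 + 16*a^+3*b*x^+7 + 18*a^+3*b^+2*x^+7 - 96*a^+3*b^+3*x^+7 - 4*a^+3*b^+4*x^+7 - 6*a^+4*x^+7 - 14*a^+4*b*x^+7 + 10*a^+4*b^+2*x^+7 + 14*a^+4*b^+3*x^+7 - 4*a^+4*b^+4*x^+7 + 2*a^+5*x^+7 - 2*a^+5*b*x^+7 - 10*a^+5*b^+2*x^+7 - 6*a^+5*b^+3*x^+7 + 8*a*b^+3*x^+8 + 16*a*b^+4*x^+8 - 24*a*b^+5*x^+8 + 12*a^+2*b*x^+8 - 20*a^+2*b^+2*x^+8 - 84*a^+2*b^+3*x^+8 - 20*a^+2*b^+4*x^+8 + 32*a^+2*b^+5*x^+8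 - 4*a^+3*x^+8 - 10*a^+3*b*x^+8 + 64*a^+3*b^+2*x^+8 + 120*a^+3*b^+3*x^+8 + 4*a^+3*b^+4*x^+8 - 14*a^+3*b^+5*x^+8 - 8*a^+4*b*x^+8 - 34*a^+4*b^+2*x^+8 - 22*a^+4*b^+3*x^+8 + 2*a^+4*b^+4*x^+8 - 2*a^+4*b^+5*x^+8 + 4*a^+5*x^+8 - 2*a^+5*b*x^+8 - 14*a^+5*b^+2*x^+8 - 6*a^+5*b^+3*x^+8 + 2*a^+5*b^+4*x^+8 + 16*a^+2*b^+2*x^+9 - 16*a^+2*b^+4*x^+9 + 4*a^+3*x^+9 - 12*a^+3*b*x^+9 - 40*a^+3*b^+2*x^+9 - 8*a^+3*b^+3*x^+9 + 20*a^+3*b^+4*x^+9 + 4*a^+3*b^+5*x^+9 - 6*a^+4*x^+9 + 18*a^+4*b*x^+9 + 52*a^+4*b^+2*x^+9 + 20*a^+4*b^+3*x^+9 - 14*a^+4*b^+4*x^+9 - 6*a^+4*b^+5*x^+9 + 2*a^+5*x^+9 - 12*a^+5*b*x^+9 - 24*a^+5*b^+2*x^+9 - 4*a^+5*b^+3*x^+9 + 6*a^+5*b^+4*x^+9 + 8*a^+3*b*x^+10 - 16*a^+3*b^+3*x^+10 + 8*a^+3*b^+5*x^+10 - 4*a^+4*x^+10 - 12*a^+4*b*x^+10 + 16*a^+4*b^+2*x^+10 + 16*a^+4*b^+3*x^+10 - 12*a^+4*b^+4*x^+10 - 4*a^+4*b^+5*x^+10 + 4*a^+5*x^+10 - 8*a^+5*b^+2*x^+10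 + 4*a^+5*b^+4*x^+10).
Definition Am {R : comPzRingType} (i j : nat) (a b : R) : R :=
  match i, j with 0,1 => 1 | 1,0 => -1 | 0,2 => a | 2,0 => -a | 1,2 => b | 2,1 => -b | _,_ => 0 end.
Definition Xv {R : comPzRingType} (p : nat) (x y z : R) : R := match p with 0 => x | 1 => y | _ => z end.
Definition Ug {R : comPzRingType} (i p : nat) (a b x y z : R) : R :=
  dNg i p a b x y z * Dg a b x y z - Ng i a b x y z * dDg p a b x y z.
Definition Eg {R : comPzRingType} (i j : nat) (a b x y z : R) : R :=
  Am 0 1 a b * x * y * Ug i 0 a b x y z * Ug j 1 a b x y z
+ Am 0 2 a b * x * z * Ug i 0 a b x y z * Ug j 2 a b x y z
+ Am 1 0 a b * y * x * Ug i 1 a b x y z * Ug j 0 a b x y z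
+ Am 1 2 a b * y * z * Ug i 1 a b x y z * Ug j 2 a b x y z
+ Am 2 0 a b * z * x * Ug i 2 a b x y z * Ug j 0 a b x y z
+ Am 2 1 a b * z * y * Ug i 2 a b x y z * Ug j 1 a b x y z
- Am i j a b * Ng i a b x y z * Ng j a b x y z * (Dg a b x y z ^+ 2).

Ltac pushm := rewrite ?(rmorphD, rmorphB, rmorphN, rmorphM, rmorph1, rmorph0, rmorphXn, rmorph_nat).

Section Morph.
Variables (R S : comPzRingType) (f : {rmorphism R -> S}) (a b x y z : R).
Lemma Dg_m : f (Dg a b x y z) = Dg (f a) (f b) (f x) (f y) (f z).
Proof. by rewrite /Dg; pushm. Qed.
Lemma Ng_m k : f (Ng k a b x y z) = Ng k (f a) (f b) (f x) (f y) (f z).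
Proof. by case: k => [|[|k]]; rewrite /Ng; pushm. Qed.
Lemma dDg_m k : f (dDg k a b x y z) = dDg k (f a) (f b) (f x) (f y) (f z).
Proof. by case: k => [|[|k]]; rewrite /dDg; pushm. Qed.
Lemma dNg_m k p : f (dNg k p a b x y z) = dNg k p (f a) (f b) (f x) (f y) (f z).
Proof. by case: k => [|[|k]]; case: p => [|[|p]]; rewrite /dNg; pushm. Qed.
Lemma Am_m i j : f (Am i j a b) = Am i j (f a) (f b).
Proof. by case: i => [|[|[|i]]]; case: j => [|[|[|j]]]; rewrite /Am; pushm. Qed.
Lemma Ug_m i p : f (Ug i p a b x y z) = Ug i p (f a) (f b) (f x) (f y) (f z).
Proof. by rewrite /Ug rmorphB !rmorphM Dg_m Ng_m dDg_m dNg_m. Qed.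
Lemma Eg_m i j : f (Eg i j a b x y z) = Eg i j (f a) (f b) (f x) (f y) (f z).
Proof. by rewrite /Eg !rmorphB !rmorphD !rmorphM !Ug_m !Am_m !Ng_m ?rmorphXn !Dg_m. Qed.
End Morph.

Definition o0 : 'I_3 := @Ordinal 3 0 isT.
Definition o1 : 'I_3 := @Ordinal 3 1 isT.
Definition o2 : 'I_3 := @Ordinal 3 2 isT.

Lemma sum3 (V : nmodType) (G : 'I_3 -> V) : \sum_(i < 3) G i = G o0 + G o1 + G o2.
Proof.
rewrite !big_ord_recr big_ord0 /= add0r.
by congr (G _ + G _ + G _); apply: val_inj.
Qed.

Lemma ord3P (i : 'I_3) : [\/ i = o0, i = o1 | i = o2].
Proof.
case: i => [[|[|[|k]]] Hk].
- by constructor 1; apply: val_inj.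
- by constructor 2; apply: val_inj.
- by constructor 3; apply: val_inj.
- by [].
Qed.

Section Frac.
Variable R : idomainType.
Local Notation "x %:F" := (@FracField.tofrac R x).

Lemma frac_numden (f : {fraction R}) :
  f = (\n_(repr f))%:F / (\d_(repr f))%:F.
Proof.
set r := repr f.
have dnz : (\d_r)%:F != 0 by rewrite tofrac_eq0 denom_ratioP.
apply: (mulIf dnz); rewrite mulfVK //.
have -> : f = (\pi_({fraction R}) r)%qT by rewrite /r reprK.
unlock FracField.tofrac; rewrite -[LHS]FracField.pi_mul; apply/eqmodP => /=.
rewrite FracField.equivfE /FracField.mulf /=.
rewrite !numden_Ratio ?mulf_neq0 ?oner_neq0 ?denom_ratioP //.
by rewrite ?mulr1 ?mul1r mulrC.
Qed.
End Frac.


Lemma quot_aux (K : fieldType) (NN DD N D N1 D1 n1 d1 : K) : D != 0 -> DD != 0 ->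
  NN * D = DD * N -> N1 * D + NN * d1 = D1 * N + DD * n1 ->
  (N1 * DD - NN * D1) / DD ^+ 2 = (n1 * D - N * d1) / D ^+ 2.
Proof.
move=> Dnz DDnz P Q.
have eN : NN = DD * N / D by apply: (mulIf Dnz); rewrite (divfK Dnz) P.
have eN1 : N1 = (D1 * N + DD * n1 - NN * d1) / D.
  by apply: (mulIf Dnz); rewrite (divfK Dnz) -Q; ring.
rewrite eN1 eN; field.
by rewrite Dnz DDnz.
Qed.

Lemma pderiv_frac (F : fieldType) (i : 'I_3) (n d : {mpoly F[3]}) : d != 0 ->
  pderiv i (n%:F / d%:F) =
  ((mderiv i n)%:F * d%:F - n%:F * (mderiv i d)%:F) / (d%:F ^+ 2).
Proof.
move=> dnz0.
have dnz : d%:F != 0 :> ratfun F by rewrite tofrac_eq0.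
unfold pderiv; cbv zeta.
move: (frac_numden (n%:F / d%:F)) (denom_ratioP (repr (n%:F / d%:F))).
move: (\n_(repr (n%:F / d%:F))) (\d_(repr (n%:F / d%:F))) => nn dd e ddnz0.
have ddnz : dd%:F != 0 :> ratfun F by rewrite tofrac_eq0.
have P0 : nn * d = dd * n.
  have H : nn%:F / dd%:F = n%:F / d%:F :> ratfun F by rewrite -e.
  have {}H : nn%:F * d%:F = dd%:F * n%:F :> ratfun F.
    by rewrite -[nn%:F](divfK ddnz) H mulrAC (divfK dnz) mulrC.
  apply/eqP; rewrite -(tofrac_eq (R := {mpoly F[3]})); apply/eqP.
  by rewrite !tofracM H.
have Q0 : mderiv i nn * d + nn * mderiv i d = mderiv i dd * n + dd * mderiv i n.
  by rewrite -!mderivM P0.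
have P := congr1 (@FracField.tofrac _) P0.
have Q := congr1 (@FracField.tofrac _) Q0.
rewrite !tofracD !tofracM in Q; rewrite !tofracM in P.
exact: (quot_aux dnz ddnz P Q).
Qed.

Lemma mderivXU (F : fieldType) (i j : 'I_3) :
  mderiv j ('X_i : {mpoly F[3]}) = (i == j)%:R.
Proof.
rewrite mderivX mnm1E; case: (i =P j) => [->|_].
  have -> : (U_(j) - U_(j))%MM = 0%MM.
    by apply/mnmP => k; rewrite mnmBE mnm0E subnn.
  by rewrite mpolyX0 scale1r.
by rewrite scale0r.
Qed.

Lemma mderiv1 (F : fieldType) (j : 'I_3) : mderiv j (1 : {mpoly F[3]}) = 0.
Proof. by rewrite -mpolyC1 mderivC. Qed.

Lemma Dg000 (R : comPzRingType) (a b : R) : Dg a b 0 0 0 = 1.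
Proof. rewrite /Dg; ring. Qed.

Section Main.
Variables (F : fieldType) (a b : F).
Local Notation mX i := ('X_i : {mpoly F[3]}).
Definition mA : {mpoly F[3]} := a%:MP.
Definition mB : {mpoly F[3]} := b%:MP.
Definition Dm := Dg mA mB (mX o0) (mX o1) (mX o2).
Definition Nm (k : nat) := Ng k mA mB (mX o0) (mX o1) (mX o2).

Lemma Dm_nz : Dm != 0.
Proof.
apply/negP => /eqP H.
have := congr1 (meval (fun _ => (0 : F))) H.
rewrite /Dm Dg_m /= !mevalXU /mA /mB !mevalC Dg000 => /eqP.
by rewrite oner_eq0.
Qed.

Ltac dsimp := rewrite ?(mderivD, mderivB, mderivN, mderivM, mderivC, mderivXU, mderiv1) /=.

Lemma dD_ok (p : 'I_3) : mderiv p Dm = dDg p mA mB (mX o0) (mX o1) (mX o2).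
Proof.
case: (ord3P p) => ->; rewrite /Dm /Dg /dDg /mA /mB /=; dsimp; ring.
Qed.

Lemma dN_ok (k p : 'I_3) : mderiv p (Nm k) = dNg k p mA mB (mX o0) (mX o1) (mX o2).
Proof.
case: (ord3P k) => ->; case: (ord3P p) => ->;
  rewrite /Nm /Ng /dNg /mA /mB /=; dsimp; ring.
Qed.

End Main.

Lemma br_gen2 (K : fieldType) (a b x y z u0 u1 u2 v0 v1 v2 c Ni Nj D : K) : D != 0 ->
  0 * x * x * (u0 / D ^+ 2) * (v0 / D ^+ 2) + 1 * x * y * (u0 / D ^+ 2) * (v1 / D ^+ 2)
  + a * x * z * (u0 / D ^+ 2) * (v2 / D ^+ 2)
  + (-1 * y * x * (u1 / D ^+ 2) * (v0 / D ^+ 2) + 0 * y * y * (u1 / D ^+ 2) * (v1 / D ^+ 2)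
     + b * y * z * (u1 / D ^+ 2) * (v2 / D ^+ 2))
  + (- a * z * x * (u2 / D ^+ 2) * (v0 / D ^+ 2) + - b * z * y * (u2 / D ^+ 2) * (v1 / D ^+ 2)
     + 0 * z * z * (u2 / D ^+ 2) * (v2 / D ^+ 2))
  - c * (Ni / D) * (Nj / D) =
  (1 * x * y * u0 * v1 + a * x * z * u0 * v2 + -1 * y * x * u1 * v0 + b * y * z * u1 * v2
   + - a * z * x * u2 * v0 + - b * z * y * u2 * v1 - c * Ni * Nj * D ^+ 2) / D ^+ 4.
Proof. move=> Dnz; field; exact: Dnz. Qed.

Lemma Am01 (R : comPzRingType) (a b : R) : Am 0 1 a b = 1. Proof. by []. Qed.
Lemma Am02 (R : comPzRingType) (a b : R) : Am 0 2 a b = a. Proof. by []. Qed.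
Lemma Am10 (R : comPzRingType) (a b : R) : Am 1 0 a b = -1. Proof. by []. Qed.
Lemma Am12 (R : comPzRingType) (a b : R) : Am 1 2 a b = b. Proof. by []. Qed.
Lemma Am20 (R : comPzRingType) (a b : R) : Am 2 0 a b = - a. Proof. by []. Qed.
Lemma Am21 (R : comPzRingType) (a b : R) : Am 2 1 a b = - b. Proof. by []. Qed.

Lemma Eg_f (R S : comPzRingType) (f : {rmorphism R -> S}) (i j : nat) (a b x y z : R) :
  f (Eg i j a b x y z) =
  1 * f x * f y * f (Ug i 0 a b x y z) * f (Ug j 1 a b x y z)
  + f a * f x * f z * f (Ug i 0 a b x y z) * f (Ug j 2 a b x y z)
  + -1 * f y * f x * f (Ug i 1 a b x y z) * f (Ug j 0 a b x y z)
  + f b * f y * f z * f (Ug i 1 a b x y z) * f (Ug j 2 a b x y z)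
  + - f a * f z * f x * f (Ug i 2 a b x y z) * f (Ug j 0 a b x y z)
  + - f b * f z * f y * f (Ug i 2 a b x y z) * f (Ug j 1 a b x y z)
  - f (Am i j a b) * f (Ng i a b x y z) * f (Ng j a b x y z) * f (Dg a b x y z) ^+ 2.
Proof.
rewrite /Eg Am01 Am02 Am10 Am12 Am20 Am21.
move: (Ug i 0 a b x y z) (Ug i 1 a b x y z) (Ug i 2 a b x y z)
  (Ug j 0 a b x y z) (Ug j 1 a b x y z) (Ug j 2 a b x y z)
  (Am i j a b) (Ng i a b x y z) (Ng j a b x y z) (Dg a b x y z).
move=> u0 u1 u2 v0 v1 v2 c ni nj d.
by rewrite !rmorphB !rmorphD ?rmorphXn !rmorphM !rmorphN rmorph1 expr2.
Qed.

Section Main2.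
Variables (F : fieldType) (a b : F).
Local Notation mX i := ('X_i : {mpoly F[3]}).
Definition xe (k : 'I_3) : ratfun F := (Nm a b k)%:F / (Dm a b)%:F.

Lemma pderiv_xe (k p : 'I_3) :
  pderiv p (xe k) = (Ug k p (mA a) (mB b) (mX o0) (mX o1) (mX o2))%:F / ((Dm a b)%:F ^+ 2).
Proof.
rewrite /xe (pderiv_frac _ _ (Dm_nz a b)) dN_ok dD_ok /Ug tofracB !tofracM.
by [].
Qed.

Lemma cst0 : cst 0 = 0 :> ratfun F. Proof. by rewrite /cst !rmorph0. Qed.
Lemma cst1 : cst 1 = 1 :> ratfun F. Proof. by rewrite /cst !rmorph1. Qed.
Lemma cstN (c : F) : cst (- c) = - cst c :> ratfun F. Proof. by rewrite /cst !rmorphN. Qed.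

Lemma Am_cst (i j : 'I_3) : (Am i j (mA a) (mB b))%:F = cst (adj3 a b i j) :> ratfun F.
Proof.
by case: (ord3P i) => ->; case: (ord3P j) => ->; rewrite /Am mxE /= /cst /mA /mB ?rmorphN ?rmorph1 ?rmorph0.
Qed.

Lemma br_eq (i j : 'I_3) :
  pbracket (adj3 a b) (xe i) (xe j) - cst (adj3 a b i j) * xe i * xe j =
  (Eg i j (mA a) (mB b) (mX o0) (mX o1) (mX o2))%:F / ((Dm a b)%:F ^+ 4).
Proof.
Time have Dnz : (Dm a b)%:F != 0 :> ratfun F by rewrite tofrac_eq0; exact: Dm_nz.
Time rewrite -Am_cst.
Time rewrite /pbracket sum3 !sum3 !mxE /= ?cstN ?cst1 ?cst0 !pderiv_xe /xe.
Time rewrite (br_gen2 _ _ _ _ _ _ _ _ _ _ _ _ _ _ Dnz).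
Time congr (_ / _).
Time exact: (esym (Eg_f (@FracField.tofrac _) i j (mA a) (mB b) (mX o0) (mX o1) (mX o2))).
Qed.
End Main2.

Section Gsys.
Variables (K : fieldType) (a b x y z t0 t1 t2 : K).
Definition S0 := t0 - x = t0 * (0 * x + 1 * y + a * z) + x * (0 * t0 + 1 * t1 + a * t2).
Definition S1 := t1 - y = t1 * (-1 * x + 0 * y + b * z) + y * (-1 * t0 + 0 * t1 + b * t2).
Definition S2 := t2 - z = t2 * (- a * x + - b * y + 0 * z) + z * (- a * t0 + - b * t1 + 0 * t2).

Lemma sys_unique : Dg a b x y z != 0 -> S0 -> S1 -> S2 ->
  [/\ t0 = Ng 0 a b x y z / Dg a b x y z, t1 = Ng 1 a b x y z / Dg a b x y z
    & t2 = Ng 2 a b x y z / Dg a b x y z].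
Proof.
move=> Dnz e0 e1 e2.
have {}e0 : t0 - x - (t0 * (0 * x + 1 * y + a * z) + x * (0 * t0 + 1 * t1 + a * t2)) = 0.
  by rewrite e0 subrr.
have {}e1 : t1 - y - (t1 * (-1 * x + 0 * y + b * z) + y * (-1 * t0 + 0 * t1 + b * t2)) = 0.
  by rewrite e1 subrr.
have {}e2 : t2 - z - (t2 * (- a * x + - b * y + 0 * z) + z * (- a * t0 + - b * t1 + 0 * t2)) = 0.
  by rewrite e2 subrr.
move: e0 e1 e2.
set E0 := _ - (_ + _); set E1 := _ - (_ + _); set E2 := _ - (_ + _) => e0 e1 e2.
have key : forall k, Dg a b x y z * (if k == 0%N then t0 else if k == 1%N then t1 else t2)
   - Ng k a b x y z = Adj k 0 a b x y z * E0 + Adj k 1 a b x y z * E1 + Adj k 2 a b x y z * E2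
   -> (if k == 0%N then t0 else if k == 1%N then t1 else t2) = Ng k a b x y z / Dg a b x y z.
  move=> k; rewrite e0 e1 e2 !mulr0 !addr0 => /eqP; rewrite subr_eq0 => /eqP <-.
  by rewrite mulrAC (divff Dnz) mul1r.
split.
- apply: (key 0%N); rewrite /E0 /E1 /E2 /Adj /Ng /Dg /=; ring.
- apply: (key 1%N); rewrite /E0 /E1 /E2 /Adj /Ng /Dg /=; ring.
- apply: (key 2%N); rewrite /E0 /E1 /E2 /Adj /Ng /Dg /=; ring.
Qed.

Lemma sys_exist : Dg a b x y z != 0 ->
  t0 = Ng 0 a b x y z / Dg a b x y z -> t1 = Ng 1 a b x y z / Dg a b x y z ->
  t2 = Ng 2 a b x y z / Dg a b x y z -> [/\ S0, S1 & S2].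
Proof.
move=> Dnz e0 e1 e2; rewrite /S0 /S1 /S2 e0 e1 e2 /Ng /=; rewrite /Dg in Dnz *; split; field; exact: Dnz.
Qed.
End Gsys.

Ltac gunf := rewrite /Eg /Ug /Am /Dg /Ng /dNg /dDg /=.

Section GenE.
Variables (R : comPzRingType).
Lemma Eg_c0 (a b t : R) : Eg 1 2 a b t (t*t) (t*t) = t^+7 * (cc0 a b + t * GG0 a b t).
Proof. gunf; rewrite /cc0 /GG0; ring. Qed.
Lemma Eg_c1 (a b t : R) : Eg 0 2 a b t (t*t) (t*t) = t^+7 * (cc1 a b + t * GG1 a b t).
Proof. gunf; rewrite /cc1 /GG1; ring. Qed.
Lemma Eg_c2 (a b t : R) : Eg 0 2 a b (t*t) t (t*t) = t^+7 * (cc2 a b + t * GG2 a b t).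
Proof. gunf; rewrite /cc2 /GG2; ring. Qed.
Lemma Eg_c3 (a b t : R) : Eg 0 1 a b (t*t) t (t*t) = t^+7 * (cc3 a b + t * GG3 a b t).
Proof. gunf; rewrite /cc3 /GG3; ring. Qed.
Lemma Eg_00 (a b x y z : R) : Eg 0 0 a b x y z = 0. Proof. gunf; ring. Qed.
Lemma Eg_11 (a b x y z : R) : Eg 1 1 a b x y z = 0. Proof. gunf; ring. Qed.
Lemma Eg_22 (a b x y z : R) : Eg 2 2 a b x y z = 0. Proof. gunf; ring. Qed.
Lemma Eg_10 (a b x y z : R) : Eg 1 0 a b x y z = - Eg 0 1 a b x y z. Proof. gunf; ring. Qed.
Lemma Eg_20 (a b x y z : R) : Eg 2 0 a b x y z = - Eg 0 2 a b x y z. Proof. gunf; ring. Qed.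
Lemma Eg_21 (a b x y z : R) : Eg 2 1 a b x y z = - Eg 1 2 a b x y z. Proof. gunf; ring. Qed.

Lemma Eg_zero (a b x y z : R) : Eg 0 1 a b x y z = 0 -> Eg 0 2 a b x y z = 0 ->
  Eg 1 2 a b x y z = 0 -> forall i j : 'I_3, Eg i j a b x y z = 0.
Proof.
move=> h01 h02 h12 i j.
case: (ord3P i) => ->; case: (ord3P j) => -> /=;
  rewrite ?Eg_00 ?Eg_11 ?Eg_22 ?Eg_10 ?Eg_20 ?Eg_21 ?h01 ?h02 ?h12 ?oppr0 //.
Qed.

Lemma good_00 (x y z : R) : forall i j : 'I_3, Eg i j 0 0 x y z = 0.
Proof. by apply: Eg_zero; gunf; ring. Qed.
Lemma good_0m (x y z : R) : forall i j : 'I_3, Eg i j 0 (-1) x y z = 0.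
Proof. by apply: Eg_zero; gunf; ring. Qed.
Lemma good_10 (x y z : R) : forall i j : 'I_3, Eg i j 1 0 x y z = 0.
Proof. by apply: Eg_zero; gunf; ring. Qed.
Lemma good_1m (x y z : R) : forall i j : 'I_3, Eg i j 1 (-1) x y z = 0.
Proof. by apply: Eg_zero; gunf; ring. Qed.
Lemma good_11 (x y z : R) : forall i j : 'I_3, Eg i j 1 1 x y z = 0.
Proof. by apply: Eg_zero; gunf; ring. Qed.
Lemma good_mm (x y z : R) : forall i j : 'I_3, Eg i j (-1) (-1) x y z = 0.
Proof. by apply: Eg_zero; gunf; ring. Qed.
End GenE.

Section CM.
Variables (R S : comPzRingType) (f : {rmorphism R -> S}) (a b : R).
Lemma cc0_m : f (cc0 a b) = cc0 (f a) (f b). Proof. by rewrite /cc0; pushm. Qed.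
Lemma cc1_m : f (cc1 a b) = cc1 (f a) (f b). Proof. by rewrite /cc1; pushm. Qed.
Lemma cc2_m : f (cc2 a b) = cc2 (f a) (f b). Proof. by rewrite /cc2; pushm. Qed.
Lemma cc3_m : f (cc3 a b) = cc3 (f a) (f b). Proof. by rewrite /cc3; pushm. Qed.
End CM.

Section Main3.
Variables (F : fieldType) (a b : F).
Local Notation mX i := ('X_i : {mpoly F[3]}).

Lemma Dm_tf : (Dm a b)%:F = Dg (cst a) (cst b) (xvar F o0) (xvar F o1) (xvar F o2).
Proof. exact: (Dg_m (@FracField.tofrac _) (mA a) (mB b) (mX o0) (mX o1) (mX o2)). Qed.

Lemma Nm_tf k : (Nm a b k)%:F = Ng k (cst a) (cst b) (xvar F o0) (xvar F o1) (xvar F o2).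
Proof. exact: (Ng_m (@FracField.tofrac _) (mA a) (mB b) (mX o0) (mX o1) (mX o2) k). Qed.

Lemma Dnzg : Dg (cst a) (cst b) (xvar F o0) (xvar F o1) (xvar F o2) != 0.
Proof. rewrite -Dm_tf tofrac_eq0; exact: Dm_nz. Qed.

Lemma xe_eq k : xe a b k = Ng k (cst a) (cst b) (xvar F o0) (xvar F o1) (xvar F o2) /
   Dg (cst a) (cst b) (xvar F o0) (xvar F o1) (xvar F o2).
Proof. by rewrite /xe Nm_tf Dm_tf. Qed.

Lemma xe_sys : kahan_system (adj3 a b) (xe a b).
Proof.
have [h0 h1 h2] := sys_exist Dnzg (xe_eq o0) (xe_eq o1) (xe_eq o2).
move=> i; case: (ord3P i) => ->; rewrite !sum3 !mxE /= ?cstN ?cst1 ?cst0.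
- exact: h0.
- exact: h1.
- exact: h2.
Qed.


Lemma xt_unique (xt : 'I_3 -> ratfun F) : kahan_system (adj3 a b) xt ->
  forall i, xt i = xe a b i.
Proof.
move=> H; have H0 := H o0; have H1 := H o1; have H2 := H o2.
rewrite !sum3 !mxE /= ?cstN ?cst1 ?cst0 in H0 H1 H2.
have [e0 e1 e2] := sys_unique Dnzg H0 H1 H2.
move=> i; case: (ord3P i) => ->; rewrite xe_eq.
- exact: e0.
- exact: e1.
- exact: e2.
Qed.

Lemma suff_gen : (forall i j : 'I_3, Eg i j (mA a) (mB b) (mX o0) (mX o1) (mX o2) = 0) ->
  kahan_poisson (adj3 a b).
Proof.
move=> HE xt Hs i j.
rewrite !(xt_unique Hs).
apply/eqP; rewrite -subr_eq0; apply/eqP.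
by rewrite br_eq HE tofrac0 mul0r.
Qed.

Lemma nec_gen : kahan_poisson (adj3 a b) ->
  forall i j : 'I_3, Eg i j (mA a) (mB b) (mX o0) (mX o1) (mX o2) = 0.
Proof.
move=> KP i j.
have := KP _ xe_sys i j.
move/eqP; rewrite -subr_eq0 br_eq => /eqP H.
have Dnz : (Dm a b)%:F ^+ 4 != 0 :> ratfun F.
  by rewrite expf_neq0 // tofrac_eq0; exact: Dm_nz.
apply/eqP; rewrite -(tofrac_eq0 (R := {mpoly F[3]})); apply/eqP.
by rewrite -(divfK Dnz (Eg _ _ _ _ _ _ _)%:F) H mul0r.
Qed.
End Main3.

Section Coef.
Variables (F : fieldType) (a b : F).
Local Notation mX i := ('X_i : {mpoly F[3]}).

Lemma mmapXU (h : 'I_3 -> {poly F}) i : mmap (@polyC F) h (mX i) = h i.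
Proof. by rewrite mmapX mmap1U. Qed.

Lemma kcoef0 : Eg 1 2 (mA a) (mB b) (mX o0) (mX o1) (mX o2) = 0 -> cc0 a b = 0.
Proof.
move=> E.
pose h : 'I_3 -> {poly F} := fun i => if i == o0 then 'X else 'X * 'X.
have := congr1 (mmap (@polyC F) h) E.
rewrite Eg_m /= !mmapXU /mA /mB !mmapC /h /=.
rewrite Eg_c0 -(cc0_m (@polyC F)) polyC0 => /eqP.
rewrite mulf_eq0 expf_eq0 polyX_eq0 andbF /= => /eqP H.
have := congr1 (fun p => p.[0]) H.
by rewrite /= hornerD hornerC hornerM hornerX mul0r addr0 horner0.
Qed.
Lemma kcoef1 : Eg 0 2 (mA a) (mB b) (mX o0) (mX o1) (mX o2) = 0 -> cc1 a b = 0.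
Proof.
move=> E.
pose h : 'I_3 -> {poly F} := fun i => if i == o0 then 'X else 'X * 'X.
have := congr1 (mmap (@polyC F) h) E.
rewrite Eg_m /= !mmapXU /mA /mB !mmapC /h /=.
rewrite Eg_c1 -(cc1_m (@polyC F)) polyC0 => /eqP.
rewrite mulf_eq0 expf_eq0 polyX_eq0 andbF /= => /eqP H.
have := congr1 (fun p => p.[0]) H.
by rewrite /= hornerD hornerC hornerM hornerX mul0r addr0 horner0.
Qed.
Lemma kcoef2 : Eg 0 2 (mA a) (mB b) (mX o0) (mX o1) (mX o2) = 0 -> cc2 a b = 0.
Proof.
move=> E.
pose h : 'I_3 -> {poly F} := fun i => if i == o1 then 'X else 'X * 'X.
have := congr1 (mmap (@polyC F) h) E.
rewrite Eg_m /= !mmapXU /mA /mB !mmapC /h /=.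
rewrite Eg_c2 -(cc2_m (@polyC F)) polyC0 => /eqP.
rewrite mulf_eq0 expf_eq0 polyX_eq0 andbF /= => /eqP H.
have := congr1 (fun p => p.[0]) H.
by rewrite /= hornerD hornerC hornerM hornerX mul0r addr0 horner0.
Qed.
Lemma kcoef3 : Eg 0 1 (mA a) (mB b) (mX o0) (mX o1) (mX o2) = 0 -> cc3 a b = 0.
Proof.
move=> E.
pose h : 'I_3 -> {poly F} := fun i => if i == o1 then 'X else 'X * 'X.
have := congr1 (mmap (@polyC F) h) E.
rewrite Eg_m /= !mmapXU /mA /mB !mmapC /h /=.
rewrite Eg_c3 -(cc3_m (@polyC F)) polyC0 => /eqP.
rewrite mulf_eq0 expf_eq0 polyX_eq0 andbF /= => /eqP H.
have := congr1 (fun p => p.[0]) H.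
by rewrite /= hornerD hornerC hornerM hornerX mul0r addr0 horner0.
Qed.
End Coef.

Lemma two_mul (F : numFieldType) (x : F) : 2 * x = 0 -> x = 0.
Proof. by move/eqP; rewrite mulf_eq0 pnatr_eq0 /= => /eqP. Qed.

Lemma final_alg (F : numFieldType) (a b : F) :
  cc0 a b = 0 -> cc1 a b = 0 -> cc2 a b = 0 -> cc3 a b = 0 -> good_pair a b.
Proof.
move=> c0 c1 c2 c3.
have f0 : a * ((a - 1) * (a + 1)) = 0.
  by apply: two_mul; rewrite -c0 /cc0; ring.
have f2 : b * ((b - 1) * (b + 1)) = 0.
  by apply: two_mul; apply: oppr_inj; rewrite oppr0 -c2 /cc2; ring.
move: f0 => /eqP; rewrite !mulf_eq0 subr_eq0 addr_eq0 => /or3P [/eqP ha|/eqP ha|/eqP ha];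
move: f2 => /eqP; rewrite !mulf_eq0 subr_eq0 addr_eq0 => /or3P [/eqP hb|/eqP hb|/eqP hb];
subst a b; rewrite /good_pair.
- by left.
- exfalso; move: c3; rewrite /cc3.
  have -> : 2 * 1 * 1 + 2 * 1 * 1 * 1 - 2 * 0 * 1 - 2 * 0 * 1 * 1 = 4 :> F by ring.
  by move/eqP; rewrite pnatr_eq0.
- by right; left.
- by right; right; left.
- by right; right; right; right; left.
- by right; right; right; left.
- exfalso; move: c1; rewrite /cc1.
  have -> : 2 * -1 + 2 * -1 * 0 - 2 * -1 * -1 - 2 * -1 * -1 * 0 = - 4 :> F by ring.
  by move/eqP; rewrite oppr_eq0 pnatr_eq0.
- exfalso; move: c1; rewrite /cc1.
  have -> : 2 * -1 + 2 * -1 * 1 - 2 * -1 * -1 - 2 * -1 * -1 * 1 = - 8 :> F by ring.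
  by move/eqP; rewrite oppr_eq0 pnatr_eq0.
- by right; right; right; right; right.
Qed.

Lemma main_gen (F : numFieldType) (a b : F) :
  kahan_poisson (adj3 a b) <-> good_pair a b.
Proof.
split.
- move=> KP; have E := nec_gen KP.
  apply: final_alg.
  + exact: (kcoef0 (E o1 o2)).
  + exact: (kcoef1 (E o0 o2)).
  + exact: (kcoef2 (E o0 o2)).
  + exact: (kcoef3 (E o0 o1)).
- move=> G; apply: suff_gen; rewrite /mA /mB.
  case: G => [[-> ->]|[[-> ->]|[[-> ->]|[[-> ->]|[[-> ->]|[-> ->]]]]]];
    rewrite ?mpolyCN ?mpolyC1 ?mpolyC0.
  + exact: good_00.
  + exact: good_0m.
  + exact: good_10.
  + exact: good_1m.
  + exact: good_11.
  + exact: good_mm.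
Qed.

Theorem mainTheorem5 :
  forall R : realType,
    (forall alpha beta : R,
        kahan_poisson (adj3 alpha beta) <-> good_pair alpha beta) /\
    (forall alpha beta : R[i],
        kahan_poisson (adj3 alpha beta) <-> good_pair alpha beta).
Proof.
move=> R; split => alpha beta; exact: main_gen.
Qed.
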